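(* Let $G_{\mathrm{AndI}}$ be the $q$-grammar with master variables $\{x,y\}$, rule $x_j\mapsto q^jx_jy_{j+1}$, $y_j\mapsto q^jx_j$, and order AIO, with $q$-derivative $D$. Let $\phi^{nc}$ be the $\mathbb{K}[q]$-linear multiplicative map sending $x_j\mapsto x$ and $y_j\mapsto y$ for all $j$, where $x,y$ are non-commuting indeterminates (so $\phi^{nc}(D^n(x_0))$ lies in the free algebra $\mathbb{K}[q]\langle x,y\rangle$). Then for $n\ge1$ the number of distinct monomials with nonzero coefficient in $\phi^{nc}(D^n(x_0))$ equals the Fibonacci number $F_{n+1}$, where $F_1=F_2=1$ and $F_{m+1}=F_m+F_{m-1}$.
   Context: $\mathbb{K}$ is a commutative ring with unity and characteristic zero, $q$ an indeterminate. For a set $S$ of master variables, $\mathbb{S}=\{s_i:s\in S,\ i\ge0\}$ is a set of non-commuting variables, $F(\mathbb{S})$ the free group on $\mathbb{S}$, $\mathbb{E}=\mathbb{K}[q][F(\mathbb{S})]$ its group algebra. A rule $R$ assigns to each $s_i$ an element of $\mathbb{E}$. The up-arrow $\uparrow$ is the linear map replacing each letter $s_i^{\pm1}$ by $s_{i+1}^{\pm1}$. AIO stably reorders the letters of a word according to the position of their underlying variable in $x_0,y_0,x_1,y_1,\dots$. The $q$-derivative of a $q$-grammar $(S,R,\rho)$ is the $\mathbb{K}[q]$-linear map with $D(w_1\cdots w_n)=\sum_{j=1}^n\rho\big(w_1\cdots w_{j-1}R(w_j)\uparrow(w_{j+1}\cdots w_n)\big)$ for letters $w_j$, $D^0=\mathrm{id}$,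 $D^k=D\circ D^{k-1}$. *)

(* Defs.v *)
From HB Require Import structures.
From mathcomp Require Import all_boot all_order all_algebra.
Set Implicit Arguments. Unset Strict Implicit. Unset Printing Implicit Defensive.
Import Order.TTheory GRing.Theory Num.Theory.
Local Open Scope ring_scope.

(* A letter s_i is encoded as (b, i) : bool * nat, with b = false for the
   master variable x and b = true for y.  Words are sequences of letters
   (only positive letters occur in D^n(x_0)). *)
Definition letter := (bool * nat)%type.
Definition word := seq letter.

Section Grammar.
Variable K : comNzRingType.

(* Elements of K[q][words] as formal sums: lists of (coefficient, word). *)
Definition elt := seq ({poly K} * word).

Definition coef_of (T : eqType) (e : seq ({poly K} * T)) (w : T) : {poly K} :=
  \sum_(p <- e | p.2 == w) p.1.

Definition up (w : word) : word := [seq (l.1, l.2.+1) | l <- w].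

(* AIO: stable reordering by position in x_0, y_0, x_1, y_1, ... *)
Definition aio_key (l : letter) : nat := (2 * l.2 + l.1)%N.
Definition AIO (w : word) : word :=
  sort (fun a b => aio_key a <= aio_key b)%N w.

Definition qder_word (R : letter -> elt) (rho : word -> word) (w : word) : elt :=
  flatten [seq [seq (cu.1, rho (take j w ++ cu.2 ++ up (drop j.+1 w)))
               | cu <- R (nth (false, 0%N) w j)]
          | j <- iota 0 (size w)].

Definition qder (R : letter -> elt) (rho : word -> word) (e : elt) : elt :=
  flatten [seq [seq (p.1 * d.1, d.2) | d <- qder_word R rho p.2] | p <- e].

Definition R_AndI (l : letter) : elt :=
  if l.1 then [:: ('X^(l.2), [:: (false, l.2)])]
  else [:: ('X^(l.2), [:: (false, l.2); (true, l.2.+1)])].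

Definition D_AndI : elt -> elt := qder R_AndI AIO.

Definition x0 : elt := [:: (1, [:: (false, 0%N)])].

(* phi^nc : x_j -> x, y_j -> y (non-commuting); monomials in K[q]<x,y>
   are words over {x,y}, encoded as seq bool. *)
Definition phi_nc (e : elt) : seq ({poly K} * seq bool) :=
  [seq (p.1, map fst p.2) | p <- e].

Definition num_monomials (T : eqType) (e : seq ({poly K} * T)) : nat :=
  size [seq w <- undup (map snd e) | coef_of e w != 0].

End Grammar.

Fixpoint fib (n : nat) : nat :=
  match n with
  | 0 => 0
  | 1 => 1
  | (m.+1 as m1).+1 => (fib m1 + fib m)%N
  end.

Definition char_zero (K : comNzRingType) : Prop :=
  forall n : nat, (0 < n)%N -> (n%:R : K) != 0.

(* Main.v *)
Require Import Defs.
From mathcomp Require Import all_boot all_order all_algebra.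
From mathcomp Require Import zify.
Set Implicit Arguments. Unset Strict Implicit. Unset Printing Implicit Defensive.
Import Order.TTheory GRing.Theory Num.Theory.

Definition weight (s : seq bool) : nat := sumn [seq (if b then 1 else 2)%N | b <- s].

Lemma weight_cat s t : weight (s ++ t) = (weight s + weight t)%N.
Proof. by rewrite /weight map_cat sumn_cat. Qed.

Lemma weight_cons b s : weight (b :: s) = ((if b then 1 else 2) + weight s)%N.
Proof. by []. Qed.

Fixpoint comps (m : nat) : seq (seq bool) :=
  match m with
  | 0 => [:: [::]]
  | 1 => [:: [:: true]]
  | (m'.+1 as m1).+1 => map (cons true) (comps m1) ++ map (cons false) (comps m')
  end.

Lemma comps_prop m :
  [/\ (forall s, (s \in comps m) = (weight s == m)), uniq (comps m), size (comps m) = fib m.+1 &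
  [/\ (forall s, (s \in comps m.+1) = (weight s == m.+1)), uniq (comps m.+1) & size (comps m.+1) = fib m.+2]].
Proof.
elim: m => [|m [IH1 IH2 IH3 [IH4 IH5 IH6]]].
  split=> //.
    case=> [|b s] //; rewrite inE /=; apply/esym/negbTE; by case: b.
  split=> //; case=> [|[] [|b s]] //; rewrite inE /=; try by case: b.
split=> //; split.
- case=> [|b s]; rewrite /= mem_cat.
    by apply/negbTE/norP; split; apply/mapP => -[].
  rewrite weight_cons; case: b.
    rewrite (mem_map (fun x y (h : true :: x = true :: y) => congr1 behead h : x = y)) IH4.
    have -> : ([:: true & s] \in [seq false :: i | i <- comps m]) = false.
      by apply/negbTE/mapP => -[].
    by rewrite orbF; apply/eqP/eqP; lia.
  rewrite (mem_map (fun x y (h : false :: x = false :: y) => congr1 behead h : x = y)) IH1.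
  have -> : ([:: false & s] \in [seq true :: i | i <- comps m.+1]) = false.
    by apply/negbTE/mapP => -[].
  by apply/eqP/eqP; lia.
- rewrite /= cat_uniq !map_inj_uniq ?IH2 ?IH5 //; try by move=> x y [].
  rewrite andbT /=; apply/hasPn => x /mapP [y _ ->]; by apply/mapP => -[].
- by rewrite /= size_cat !size_map IH3 IH6 addnC.
Qed.

Definition W n := map (cons false) (comps n).

Lemma mem_W n u : u \in W n <-> exists t, u = false :: t /\ weight t = n.
Proof.
split.
  by case/mapP => t; case: (comps_prop n) => h _ _ _; rewrite h => /eqP ? ->; exists t.
case=> t [-> h]; apply/mapP; exists t => //.
by case: (comps_prop n) => -> _ _ _; apply/eqP.
Qed.

Lemma uniq_W n : uniq (W n).
Proof. by rewrite map_inj_uniq; [case: (comps_prop n)| move=> x y []]. Qed.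

Lemma size_W n : size (W n) = fib n.+1.
Proof. by rewrite size_map; case: (comps_prop n). Qed.

Local Open Scope ring_scope.

Section S.
Variable K : comNzRingType.
Hypothesis HK : char_zero K.

Lemma coef_nz_aux (T : eqType) (e : seq ({poly K} * T)) w k0 :
  (forall p, p \in e -> exists k, p.1 = 'X^k) ->
  exists m : nat, (coef_of e w)`_k0 = m%:R /\
    ((exists2 p, p \in e & p.2 = w /\ p.1 = 'X^k0) -> (0 < m)%N).
Proof.
elim: e => [|[a t] e IH] H.
  by exists 0%N; rewrite /coef_of big_nil coef0; split => // -[].
have [|m [hm1 hm2]] := IH; first by move=> p pe; apply: H; rewrite inE pe orbT.
have [k hk] := H _ (mem_head _ _); simpl in hk.
rewrite /coef_of big_cons -/(coef_of e w).
case: eqP => hx.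
  exists ((k0 == k) + m)%N; rewrite /= hk coefD hm1 coefXn natrD; split => //.
  case=> p; rewrite inE => /orP[/eqP hp [_ hp1]|pe hp].
    rewrite hp /= in hp1; move: (congr1 (fun q : {poly K} => size q) hp1); rewrite /= !size_polyXn => -[->].
    by rewrite eqxx.
  by have := hm2 (ex_intro2 _ _ p pe hp); lia.
exists m; split => // -[p]; rewrite inE => /orP[/eqP -> [] //|pe hp].
by apply: hm2; exists p.
Qed.

Lemma coef_nz (T : eqType) (e : seq ({poly K} * T)) w :
  (forall p, p \in e -> exists k, p.1 = 'X^k) -> w \in map snd e -> coef_of e w != 0.
Proof.
move=> H /mapP [p pe ->].
have [k hk] := H p pe.
have [m [hm1 hm2]] := coef_nz_aux p.2 k H.
have m0 : (0 < m)%N by apply: hm2; exists p.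
apply/eqP => h; move: hm1; rewrite h coef0 => /esym/eqP; apply/negP.
exact: HK.
Qed.
End S.

Definition dl : letter := (false, 0%N).
Definition Rw (l : letter) : word :=
  if l.1 then [:: (false, l.2)] else [:: (false, l.2); (true, l.2.+1)].
Definition step (w : word) (j : nat) : word :=
  take j w ++ Rw (nth dl w j) ++ up (drop j.+1 w).

Section S.
Variable K : comNzRingType.

Lemma qder_wordE w : qder_word (@R_AndI K) AIO w =
  [seq ('X^((nth dl w j).2), AIO (step w j)) | j <- iota 0 (size w)].
Proof.
rewrite /qder_word; elim: (iota 0 (size w)) => //= j s ->.
rewrite /R_AndI /step /Rw /dl; by case: (nth (false, 0%N) w j) => [[] i].
Qed.

Lemma mem_D (e : elt K) p j : p \in e -> (j < size p.2)%N ->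
  (p.1 * 'X^((nth dl p.2 j).2), AIO (step p.2 j)) \in D_AndI e.
Proof.
rewrite /D_AndI /qder => pe hj; apply/flattenP.
exists [seq (p.1 * d.1, d.2) | d <- qder_word (@R_AndI K) AIO p.2].
  by apply/mapP; exists p.
rewrite qder_wordE -map_comp; apply/mapP; exists j => //.
by rewrite mem_iota.
Qed.

Lemma memD_inv (e : elt K) p' : p' \in D_AndI e -> exists p, exists j,
  [/\ p \in e, (j < size p.2)%N & p' = (p.1 * 'X^((nth dl p.2 j).2), AIO (step p.2 j))].
Proof.
case/flattenP => s /mapP [p pe ->].
rewrite qder_wordE -map_comp; case/mapP => j; rewrite mem_iota => /andP[_ hj] ->.
by exists p, j.
Qed.
End S.

Local Close Scope ring_scope.

Definition rep (c : bool) : seq bool := if c then [:: false] else [:: false; true].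

Definition InvW n (w : word) :=
  [/\ exists t, w = dl :: t, sorted ltn (map snd w) & weight (map fst w) = n.+2].

Lemma map_snd_up Q : map snd (up Q) = map S (map snd Q).
Proof. by rewrite /up -!map_comp. Qed.

Lemma map_fst_up Q : map fst (up Q) = map fst Q.
Proof. by rewrite /up -!map_comp. Qed.

Lemma pathS i Q : path ltn i Q -> path ltn i.+1 (map S Q).
Proof. by elim: Q i => //= q Q IH i /andP[h1 h2]; rewrite ltnS h1 IH. Qed.

Lemma pathS' i Q : path ltn i Q -> path ltn i (map S Q).
Proof.
case: Q => //= q Q /andP[h1 h2]; rewrite ltnS (ltnW h1) /=; exact: pathS.
Qed.

Lemma sorted_repl A i B C : sorted ltn (A ++ i :: B) -> path ltn i C -> sorted ltn (A ++ i :: C).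
Proof.
case: A => [|a A] /=; first by [].
rewrite !cat_path /= => /and3P[-> -> _] ->; by [].
Qed.

Lemma step_gen P l Q : step (P ++ l :: Q) (size P) = P ++ Rw l ++ up Q.
Proof.
rewrite /step take_size_cat // nth_cat ltnn subnn /=.
by rewrite drop_cat ltnNge leqnSn /= subSnn /= drop0.
Qed.

Lemma step_sorted P l Q : sorted ltn (map snd (P ++ l :: Q)) ->
  sorted ltn (map snd (P ++ Rw l ++ up Q)).
Proof.
rewrite !map_cat map_snd_up /= => h.
have hQ : path ltn l.2 (map snd Q).
  by move: h; case: (map snd P) => [|a A] //=; rewrite cat_path /= => /and3P[].
rewrite /Rw; case: l.1 h hQ => /= h hQ; apply: (sorted_repl h) => //=.
  exact: pathS'.
by rewrite ltnSn pathS.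
Qed.

Lemma AIO_id v : sorted ltn (map snd v) -> AIO v = v.
Proof.
move=> h; apply: sorted_sort; first by move=> a b c; apply: leq_trans.
rewrite sorted_map in h; apply: sub_sorted h => a b /=.
rewrite /aio_key; case: a.1; case: b.1 => /=; lia.
Qed.

Lemma step_head P l Q t : P ++ l :: Q = dl :: t -> exists t', P ++ Rw l ++ up Q = dl :: t'.
Proof.
case: P => [|p P] /=; last by case=> -> _; eexists.
by case=> -> _; eexists.
Qed.

Lemma step_fst P l Q : map fst (P ++ Rw l ++ up Q) = map fst P ++ rep l.1 ++ map fst Q.
Proof. by rewrite !map_cat map_fst_up /Rw /rep; case: l.1. Qed.

Lemma weight_rep c : weight (rep c) = ((if c then 1 else 2) + 1)%N.
Proof. by case: c. Qed.

Lemma step_inv n P l Q : InvW n (P ++ l :: Q) ->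
  [/\ InvW n.+1 (P ++ Rw l ++ up Q), AIO (P ++ Rw l ++ up Q) = P ++ Rw l ++ up Q
   & map fst (P ++ Rw l ++ up Q) = map fst P ++ rep l.1 ++ map fst Q].
Proof.
case=> [[t ht] hs hw].
have hs' := step_sorted hs.
split; [split| |].
- exact: step_head ht.
- exact: hs'.
- rewrite step_fst !weight_cat weight_rep.
  move: hw; rewrite map_cat !weight_cat /= weight_cons; lia.
- exact: AIO_id.
- exact: step_fst.
Qed.

Lemma has_ft s : true \in s -> exists a b, false :: s = a ++ false :: true :: b.
Proof.
elim: s => // d s IH; rewrite inE; case: d => /=.
  by move=> _; exists [::], s.
move=> /IH [a [b ->]]; by exists (false :: a), b.
Qed.

Lemma decomp n s' : weight s' = n.+1 -> exists a c b,
  false :: s' = a ++ rep c ++ b /\ (exists t, a ++ c :: b = false :: t /\ weight t = n).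
Proof.
move=> hw.
have hw' : weight (false :: s') = n.+3 by rewrite weight_cons hw.
have gen : forall a c b, false :: s' = a ++ rep c ++ b ->
    (a ++ c :: b) = false :: behead (a ++ c :: b) -> weight (behead (a ++ c :: b)) = n.
  move=> a c b e1 e2; move: hw'; rewrite e1 !weight_cat weight_rep.
  have h1 := weight_cons false (behead (a ++ c :: b)).
  rewrite -e2 weight_cat weight_cons in h1.
  clear e1 e2; case: c h1 => /= h1; lia.
case/lastP: s' hw hw' gen => [|s'' x] hw hw' gen; first by [].
case: x hw hw' gen => hw hw' gen.
  have : true \in rcons s'' true by rewrite mem_rcons mem_head.
  case/has_ft => a [b e].
  exists a, false, b; split; first by rewrite e.
  have e2 : a ++ false :: b = false :: behead (a ++ false :: b).
    by move: e; case: a => [|y a] //= [->].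
  by exists (behead (a ++ false :: b)); split => //; apply: gen => //; rewrite e.
exists (false :: s''), true, [::]; split; first by rewrite /= cats1.
exists (rcons s'' true); split; first by rewrite /= cats1.
by rewrite -(gen (false :: s'') true [::]) //= cats1.
Qed.

Local Open Scope ring_scope.

Section S.
Variable K : comNzRingType.

Lemma split_word (w : word) j : (j < size w)%N ->
  w = take j w ++ nth dl w j :: drop j.+1 w /\ size (take j w) = j.
Proof. by move=> hj; rewrite -drop_nth // cat_take_drop size_take hj. Qed.

Lemma inv_all n p : p \in iter n (@D_AndI K) (x0 K) ->
  (exists k, p.1 = 'X^k) /\ InvW n p.2.
Proof.
elim: n p => [|n IH] p /=.
  rewrite inE => /eqP -> /=; split; first by exists 0%N; rewrite expr0.
  by split => //; exists [::].
case/memD_inv => q [j [qe hj ->]] /=.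
have [[k hk] hinv] := IH q qe.
have [ew sP] := split_word hj.
have es : step q.2 j = take j q.2 ++ Rw (nth dl q.2 j) ++ up (drop j.+1 q.2).
  by move: (step_gen (take j q.2) (nth dl q.2 j) (drop j.+1 q.2)); rewrite sP -ew.
have hinv' := hinv; rewrite ew in hinv'.
have [h1 h2 h3] := step_inv hinv'.
split; first by rewrite hk -exprD; eexists.
by rewrite es h2.
Qed.

Lemma lower n u : u \in W n ->
  exists2 p, p \in iter n (@D_AndI K) (x0 K) & map fst p.2 = u.
Proof.
elim: n u => [|n IH] u.
  rewrite /W /= inE => /eqP ->; exists (1, [:: (false, 0%N)]) => //.
  by rewrite inE.
case/mem_W => s' [-> hw].
have [a [c [b [eu [t [et ht]]]]]] := decomp hw.
have [|p pe hp] := IH (a ++ c :: b); first by apply/mem_W; exists t.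
have hj : (size a < size p.2)%N.
  by rewrite -(size_map fst) hp size_cat /=; lia.
have [ew sP] := split_word hj.
have [_ hinv] := inv_all pe.
have es : step p.2 (size a) = take (size a) p.2 ++ Rw (nth dl p.2 (size a)) ++ up (drop (size a).+1 p.2).
  by move: (step_gen (take (size a) p.2) (nth dl p.2 (size a)) (drop (size a).+1 p.2)); rewrite sP -ew.
have hinv' := hinv; rewrite ew in hinv'.
have [_ h2 h3] := step_inv hinv'.
exists (p.1 * 'X^((nth dl p.2 (size a)).2), AIO (step p.2 (size a))).
  exact: mem_D.
rewrite /= es h2 h3 eu.
have -> : map fst (take (size a) p.2) = a by rewrite map_take hp take_size_cat.
have -> : map fst (drop (size a).+1 p.2) = b.
  by rewrite map_drop hp drop_cat ltnNge leqnSn /= subSnn /= drop0.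
have -> : (nth dl p.2 (size a)).1 = c.
  by rewrite -(nth_map dl false) // hp nth_cat ltnn subnn.
by [].
Qed.
End S.


Local Close Scope ring_scope.

Theorem proposition6p10 (K : comNzRingType) (HK : char_zero K) (n : nat) :
  (1 <= n)%N ->
  num_monomials (phi_nc (iter n (@D_AndI K) (x0 K))) = fib n.+1.
Proof.
move=> _; set e := iter n (@D_AndI K) (x0 K).
have hsnd : map snd (phi_nc e) = map (fun p => map fst p.2) e by rewrite /phi_nc -map_comp.
have hcoef : forall p, p \in phi_nc e -> exists k, p.1 = ('X^k)%R.
  move=> p /mapP [q qe ->] /=; by have [[k hk] _] := inv_all qe; exists k.
rewrite /num_monomials (_ : filter _ _ = undup (map snd (phi_nc e))); last first.
  apply/all_filterP/allP => w; rewrite mem_undup => hw; apply: (coef_nz HK) => //.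
rewrite -size_W; apply: perm_size; apply: uniq_perm; first exact: undup_uniq.
  exact: uniq_W.
move=> u; rewrite mem_undup hsnd; apply/idP/idP.
  case/mapP => p pe ->; have [_ [[t ht] _ hw]] := inv_all pe.
  apply/mem_W; exists (map fst t); split; first by rewrite ht.
  by move: hw; rewrite ht /= weight_cons; lia.
by case/(lower K) => p pe <-; apply/mapP; exists p.
Qed.
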